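(* For every $n\ge 1$ and every Dyck path $D\in\mathcal{D}_n$, $\varphi(\psi(D))=\zeta(D)$, where $\zeta$ is the zeta map. In other words $\varphi\circ\psi=\zeta$.
   Context: A Dyck path of size $n$ is a lattice path from $(0,0)$ to $(n,n)$ with steps $\uparrow=(0,1)$ and $\rightarrow=(1,0)$ staying weakly above $y=x$; $\mathcal{D}_n$ is their set. Its area vector $(a_1,\dots,a_n)$ has $a_i$ equal to the number of full unit squares lying between the path and the diagonal $y=x$ in the row $i-1\le y\le i$ (area vectors are exactly the integer sequences with $a_1=0$, $0\le a_i\le a_{i-1}+1$, and determine the path). For a finite $S=\{x_1<\dots<x_n\}\subset\mathbb{R}$, $\preceq_S$ is the partial order on $[n]$ with $i\prec_S j$ iff $x_i+1<x_j$; a unit interval poset is a poset isomorphic to some $([n],\preceq_S)$ ($S$ is a starting set). $\psi$: for $D\in\mathcal{D}_n$ with area vector $(a_1,\dots,a_n)$, $\psi(D)$ is the poset on $[n]$ with $i\prec j$ iff either $a_i+2\le a_j$, or ($a_i+1=a_j$ and $i<j$); it is a unit interval poset. $\varphi$: for a unit interval poset $P$, choose a starting set $S$ of $P$ with $S\cap S^+=\varnothing$ where $S^+=\{x+1:x\in S\}$; write $S\cup S^+=\{y_1<\dots<y_{2n}\}$; $\varphi(P)$ is the Dyck path whose $i$-th step is $\uparrow$ if $y_i\in S$ and $\rightarrow$ otherwise (this is independent of the choice of $S$). Zeta map $\zeta:\mathcal{D}_n\to\mathcal{D}_n$ (Haglund's zeta map): for $D$ with area vector $(a_1,\dots,a_n)$,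 $\zeta(D)$ is the concatenation, for $\ell=0,1,2,\dots,\max_i a_i+1$ in this order, of the words obtained by scanning $j=1,2,\dots,n$ from left to right and writing $\uparrow$ whenever $a_j=\ell$ and $\rightarrow$ whenever $a_j=\ell-1$ (and nothing otherwise). *)

(* Defs.v *)
From HB Require Import structures.
From mathcomp Require Import all_boot all_order all_algebra.
From mathcomp Require Import reals.
Set Implicit Arguments. Unset Strict Implicit. Unset Printing Implicit Defensive.
Import Order.TTheory GRing.Theory Num.Theory.

(* A lattice path is a word over {up, right}: true = up (0,1), false = right (1,0). *)

Definition is_dyck (n : nat) (D : seq bool) : Prop :=
  [/\ size D = (2 * n)%N, count id D = n &
      forall k, (count (negb) (take k D) <= count id (take k D))%N].

(* Area vector: the i-th up step (row i-1 <= y <= i, 1-indexed) starts at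
   x-coordinate r = #rights before it; the full unit squares of that row lying
   between the path and the diagonal are [x,x+1]x[i-1,i] for r <= x <= i-2,
   so a_i = (i-1) - r.  [u] = #ups so far, [r] = #rights so far. *)
Fixpoint area_aux (u r : nat) (D : seq bool) : seq nat :=
  match D with
  | [::] => [::]
  | true :: D' => (u - r)%N :: area_aux u.+1 r D'
  | false :: D' => area_aux u r.+1 D'
  end.
Definition area (D : seq bool) : seq nat := area_aux 0 0 D.

(* psi: the poset on [n] (encoded 0-indexed as 'I_n) given by the strict
   order i < j iff a_i + 2 <= a_j, or (a_i + 1 = a_j and i < j). *)
Definition psi (n : nat) (a : seq nat) : rel 'I_n :=
  fun i j => ((nth 0 a i).+2 <= nth 0 a j)%N
             || (((nth 0 a i).+1 == nth 0 a j) && (i < j)%N).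

(* S = {x_1 < ... < x_n} (given as a strictly increasing list) is a starting
   set of the (strict) poset P on [n]: P is isomorphic to ([n], <_S) where
   i <_S j iff x_i + 1 < x_j. *)
Definition starting_set (R : realType) (n : nat) (P : rel 'I_n) (S : seq R) : Prop :=
  [/\ size S = n, sorted <%R S &
      exists sigma : 'I_n -> 'I_n, bijective sigma /\
        forall i j : 'I_n, P i j = (nth 0 S (sigma i) + 1 < nth 0 S (sigma j))%R].

Definition disjoint_shift (R : realType) (S : seq R) : Prop :=
  forall x, x \in S -> (x + 1)%R \notin S.

Definition phi_word (R : realType) (S : seq R) : seq bool :=
  [seq (y \in S) | y <- sort <=%R (S ++ [seq (x + 1)%R | x <- S])].

(* Haglund's zeta map, on the area vector a. For l = 0, ..., max a + 1,
   scan a left to right writing up when a_j = l and right when a_j = l - 1. *)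
Definition zeta_word (a : seq nat) : seq bool :=
  flatten [seq [seq (aj == l) | aj <- a & (aj == l) || (aj.+1 == l)]
          | l <- iota 0 (foldr maxn 0 a).+2].

Arguments psi n a : clear implicits.
Arguments starting_set R n P S : clear implicits.
Arguments disjoint_shift R S : clear implicits.
Arguments phi_word R S : clear implicits.

(* Main.v *)
Require Import Defs.
From HB Require Import structures.
From mathcomp Require Import all_boot all_order all_algebra.
From mathcomp Require Import reals zify.
Import Order.TTheory GRing.Theory Num.Theory.

Fixpoint tb (w : seq bool) : seq nat :=
  match w with
  | [::] => [::]
  | true :: w' => map succn (tb w')
  | false :: w' => 0%N :: tb w'
  end.

Lemma tb_inj w1 w2 : count id w1 = count id w2 -> tb w1 = tb w2 -> w1 = w2.
Proof.
elim: w1 w2 => [|b1 w1 IH] [|b2 w2] //=.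
- by case: b2 => //= _; case: (tb w2).
- by case: b1 => //= _; case: (tb w1).
case: b1; case: b2 => /=.
- by move=> [Hc] /(inj_map succn_inj) Ht; rewrite (IH _ Hc Ht).
- by case: (tb w1).
- by case: (tb w2).
- by move=> Hc [Ht]; rewrite (IH _ Hc Ht).
Qed.

Lemma tb_sorted w : sorted leq (tb w).
Proof.
elim: w => [|b w IH] //=; case: b => /=.
  by rewrite sorted_map.
by case: (tb w) IH.
Qed.


Lemma key_lt (x y i j N : nat) : (i < N)%N -> (j < N)%N ->
  (x.+1 * N + i < y * N + j)%N = (x.+2 <= y)%N || ((x.+1 == y) && (i < j)%N).
Proof.
move=> iN jN; case: (ltngtP x.+1 y) => H /=.
- apply/idP; nia.
- apply/negbTE; rewrite -leqNgt; nia.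
- by rewrite -H ltn_add2l.
Qed.

Lemma keyE x y i j N : (i < N)%N -> (j < N)%N -> (x*N + i = y*N + j)%N -> x = y /\ i = j.
Proof.
move=> iN jN E.
have eij : i = j by have := congr1 (modn^~ N) E; rewrite /= !modnMDl !modn_small.
subst; split=> //; apply/eqP; rewrite -(eqn_pmul2r (leq_ltn_trans (leq0n _) jN)); apply/eqP; lia.
Qed.

Lemma key_mem (f : nat -> nat) n l j : (j < n.+1)%N ->
  ((l * n.+1 + j) \in [seq (f i * n.+1 + i)%N | i <- iota 0 n]) = (j < n)%N && (f j == l).
Proof.
move=> jN; apply/mapP/andP.
  case=> i; rewrite mem_iota add0n => /andP[_ iN] E.
  have [-> ->] := keyE l (f i) j i n.+1 jN (ltnW iN) E.
  by split.
case=> jn /eqP <-; exists j => //; by rewrite mem_iota.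
Qed.

Lemma key_memS (f : nat -> nat) n l j : (j < n.+1)%N ->
  ((l * n.+1 + j) \in [seq ((f i).+1 * n.+1 + i)%N | i <- iota 0 n]) = (j < n)%N && ((f j).+1 == l).
Proof. exact: (key_mem (fun i => (f i).+1)). Qed.

Lemma iota_blocks N M m : iota (m * N) (M * N) = flatten [seq iota (l * N) N | l <- iota m M].
Proof.
elim: M m => [|M IH] m /=; first by [].
by rewrite mulSn iotaD -IH mulSn addnC.
Qed.

Lemma nth_le_max (a : seq nat) i : (nth 0 a i <= foldr maxn 0 a)%N.
Proof.
elim: a i => [|x a IH] [|i] //=; first by rewrite leq_maxl.
exact: leq_trans (IH i) (leq_maxr _ _).
Qed.

Lemma sort_uniq_iota (K : seq nat) B : uniq K -> all (fun k => k < B)%N K ->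
  sort leq K = [seq k <- iota 0 B | k \in K].
Proof.
move=> uK aK; apply: (irr_sorted_eq ltn_trans ltnn).
- by rewrite ltn_sorted_uniq_leq sort_uniq uK (sort_sorted leq_total).
- apply: sorted_filter; [exact: ltn_trans | exact: iota_ltn_sorted].
move=> k; rewrite mem_sort mem_filter mem_iota /= add0n.
by case kK: (k \in K) => //=; rewrite (allP aK k kK).
Qed.


Lemma uniq_keys (f : nat -> nat) n : uniq [seq (f i * n.+1 + i)%N | i <- iota 0 n].
Proof.
rewrite map_inj_in_uniq ?iota_uniq // => i j.
rewrite !mem_iota /= !add0n => iN jN E.
by have [_ ->] := keyE _ _ _ _ n.+1 (ltnW iN) (ltnW jN) E.
Qed.

Section Reals.
Variable R : realType.
Local Open Scope ring_scope.

Lemma tb_map_sorted (L : seq R) (T : pred R) : sorted <%R L ->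
  tb (map T L) = [seq count T [seq x <- L | x < y] | y <- L & ~~ T y].
Proof.
elim: L => [|x L IH] //= Hs.
have HL : sorted <%R L := path_sorted Hs.
have Hall : all (fun y => x < y) L := order_path_min lt_trans Hs.
case Tx: (T x) => /=.
  rewrite IH // -map_comp. apply/eq_in_map => y; rewrite mem_filter => /andP[_ yL].
  by rewrite /= (allP Hall y yL) /= Tx.
rewrite IH // ltxx.
have -> : [seq z <- L | z < x] = [::].
  rewrite -(filter_pred0 L); apply: eq_in_filter => z zL.
  by rewrite /= ltNge le_eqVlt (allP Hall z zL) orbT.
congr (_ :: _); apply/eq_in_map => y; rewrite mem_filter => /andP[_ yL].
by rewrite /= (allP Hall y yL) /= Tx.
Qed.


Lemma phi_tb (S : seq R) : sorted <%R S -> disjoint_shift R S ->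
  perm_eq (tb (phi_word R S)) [seq count (fun x => x < y + 1) S | y <- S]
  /\ count id (phi_word R S) = size S.
Proof.
move=> Ss Hd.
set Sp := [seq x + 1 | x <- S].
have nSp : forall y, y \in Sp -> y \notin S.
  by move=> y /mapP[x xS ->]; apply: Hd.
have uS : uniq S := lt_sorted_uniq Ss.
have uSSp : uniq (S ++ Sp).
  rewrite cat_uniq uS (map_inj_uniq (@addIr _ 1)) // uS andbT /=.
  by apply/hasPn => y /nSp.
set L := sort <=%R (S ++ Sp).
have pL : perm_eq L (S ++ Sp) by rewrite perm_sort.
have sL : sorted <%R L by rewrite sort_lt_sorted.
have -> : phi_word R S = map (fun y => y \in S) L by [].
split; last first.
  rewrite count_map (permP pL) count_cat.
  rewrite (eq_in_count (a2 := predT)) ?count_predT; last by move=> x xS; rewrite /= xS.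
  rewrite (eq_in_count (a2 := pred0)) ?count_pred0 ?addn0 //.
  by move=> y /nSp /negbTE.
rewrite tb_map_sorted //.
apply: (perm_trans (perm_map _ (perm_filter _ pL))).
rewrite filter_cat.
rewrite (eq_in_filter (a2 := pred0)); last by move=> x xS; rewrite /= xS.
rewrite filter_pred0 /=.
rewrite (_ : [seq x <- Sp | x \notin S] = Sp); last first.
  by apply/all_filterP/allP => y /nSp.
rewrite /Sp -map_comp; rewrite (eq_map (g := fun y => count (fun x => x < y + 1) S)) //.
move=> y /=; rewrite count_filter (permP pL) count_cat.
rewrite [X in (_ + X)%N](eq_in_count (a2 := pred0)) ?count_pred0 ?addn0.
  by apply: eq_in_count => x xS /=; rewrite xS.
by move=> z /nSp /negbTE /= ->.
Qed.


Lemma perm_bij n (sg : 'I_n -> 'I_n) : bijective sg ->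
  perm_eq (map sg (enum 'I_n)) (enum 'I_n).
Proof.
move=> Hb; apply: uniq_perm; first by rewrite (map_inj_uniq (bij_inj Hb)) enum_uniq.
  exact: enum_uniq.
move=> x; rewrite mem_enum; apply/mapP; case: Hb => t st ts.
by exists (t x); rewrite ?mem_enum ?ts.
Qed.

Definition Ccan n (P : rel 'I_n) : seq nat :=
  [seq count (fun j => ~~ P i j) (enum 'I_n) | i <- enum 'I_n].

Lemma start_perm n (P : rel 'I_n) (S : seq R) :
  starting_set R n P S -> disjoint_shift R S ->
  perm_eq [seq count (fun x => x < y + 1) S | y <- S] (Ccan n P).
Proof.
case=> sz Ss [sg [Hb HP]] Hd.
pose s (k : 'I_n) := nth 0 S k.
have ES : S = [seq s k | k <- enum 'I_n].
  rewrite /s -[in LHS](mkseq_nth 0 S) sz /mkseq -val_enum_ord -map_comp //.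
have sS : forall k, s k \in S by move=> k; rewrite mem_nth // sz.
pose g k := count (fun j => ~~ (s k + 1 < s j)) (enum 'I_n).
have -> : [seq count (fun x => x < y + 1) S | y <- S] = [seq g k | k <- enum 'I_n].
  rewrite {2}ES -map_comp; apply: eq_map => k /=.
  rewrite {1}ES count_map /g; apply: eq_count => j /=.
  have E0 : (s k + 1 == s j) = false.
    by apply/negbTE/eqP => E; move: (Hd _ (sS k)); rewrite E sS.
  by rewrite ltNge le_eqVlt E0.
have -> : Ccan n P = [seq g (sg i) | i <- enum 'I_n].
  apply: eq_map => i; rewrite /g.
  rewrite -[RHS](permP (perm_bij n sg Hb)) [RHS]count_map; apply: eq_count => j /=.
  by rewrite HP.
by have := perm_map g (perm_bij n sg Hb); rewrite -map_comp perm_sym.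
Qed.


Lemma phi_unique n (P : rel 'I_n) S1 S2 :
  starting_set R n P S1 -> disjoint_shift R S1 ->
  starting_set R n P S2 -> disjoint_shift R S2 -> phi_word R S1 = phi_word R S2.
Proof.
move=> H1 D1 H2 D2.
have [p1 c1] : _ /\ _ := phi_tb S1 (let: And3 _ s _ := H1 in s) D1.
have [p2 c2] : _ /\ _ := phi_tb S2 (let: And3 _ s _ := H2 in s) D2.
have q1 := start_perm _ _ _ H1 D1.
have q2 := start_perm _ _ _ H2 D2.
apply: tb_inj.
  by rewrite c1 c2; case: H1 => -> _ _; case: H2 => -> _ _.
apply: (sorted_eq leq_trans anti_leq (tb_sorted _) (tb_sorted _)).
apply: (perm_trans p1); apply: (perm_trans q1); rewrite perm_sym.
exact: perm_trans p2 q2.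
Qed.

Section Constr.
Variables (n : nat) (a : seq nat).
Hypothesis sza : size a = n.

Definition key i := (nth 0%N a i * n.+1 + i)%N.
Definition Kup := [seq key i | i <- iota 0%N n].
Definition Krt := [seq ((nth 0%N a i).+1 * n.+1 + i)%N | i <- iota 0%N n].
Definition e (k : nat) : R := k%:R / n.+1%:R.
Definition S0 := map e (sort leq Kup).

Lemma Npos : 0 < (n.+1)%:R^-1 :> R.
Proof. by rewrite invr_gt0 ltr0n. Qed.

Lemma e_lt x y : (e x < e y) = (x < y)%N.
Proof. by rewrite /e ltr_pM2r ?Npos // ltr_nat. Qed.

Lemma e_le x y : (e x <= e y) = (x <= y)%N.
Proof. by rewrite /e ler_pM2r ?Npos // ler_nat. Qed.

Lemma e_inj : injective e.
Proof. by move=> x y E; apply/eqP; rewrite eqn_leq -!e_le E !lexx. Qed.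

Lemma e_shift x : e x + 1 = e (x + n.+1).
Proof.
by rewrite /e natrD mulrDl divff // pnatr_eq0.
Qed.

Lemma uKup : uniq Kup.
Proof.
rewrite map_inj_in_uniq ?iota_uniq // => i j.
rewrite !mem_iota /= !add0n => iN jN E.
by have [_ ->] := keyE _ _ _ _ n.+1 (ltnW iN) (ltnW jN) E.
Qed.

Lemma S0_sorted : sorted <%R S0.
Proof.
rewrite sorted_map (eq_sorted (e' := ltn)); last by move=> x y; rewrite /= e_lt.
by rewrite ltn_sorted_uniq_leq sort_uniq uKup (sort_sorted leq_total).
Qed.


Lemma key_in (i : 'I_n) : key i \in sort leq Kup.
Proof. by rewrite mem_sort; apply: map_f; rewrite mem_iota /= add0n. Qed.

Lemma size_sK : size (sort leq Kup) = n.
Proof. by rewrite size_sort size_map size_iota. Qed.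

Lemma S0_start : starting_set R n (psi n a) S0 /\ disjoint_shift R S0.
Proof.
have idx_lt : forall i : 'I_n, (index (key i) (sort leq Kup) < n)%N.
  by move=> i; rewrite -{2}size_sK index_mem key_in.
pose sg (i : 'I_n) : 'I_n := Ordinal (idx_lt i).
have nth_sg : forall i, nth 0 S0 (sg i) = e (key i).
  move=> i; rewrite /S0 (nth_map 0%N) /=; last by rewrite size_sK.
  by rewrite nth_index ?key_in.
split; last first.
  move=> x /mapP[k kK ->]; rewrite e_shift; apply/negP => /mapP[k' k'K E].
  move/e_inj: E; move: kK k'K; rewrite !mem_sort => /mapP[i iN ->] /mapP[j jN ->].
  move: iN jN; rewrite !mem_iota /= !add0n => iN jN.
  rewrite /key addnAC -mulSnr => E.
  have [Ea _] := keyE _ _ _ _ n.+1 (ltnW iN) (ltnW jN) E.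
  have [_ Eij] := keyE _ _ _ _ n.+1 (ltnW iN) (ltnW jN) E.
  by move: Ea; rewrite Eij => /esym /n_Sn.
split.
- by rewrite /S0 size_map size_sK.
- exact: S0_sorted.
exists sg; split.
  apply: inj_card_bij => // i j /(congr1 val) /= E.
  have := congr1 (nth 0%N (sort leq Kup)) E; rewrite !nth_index ?key_in // /key => E2.
  apply: val_inj; by have [_ H] := keyE _ _ _ _ n.+1 (ltnW (ltn_ord i)) (ltnW (ltn_ord j)) E2 => //.
move=> i j; rewrite !nth_sg e_shift e_lt /key addnAC -mulSnr (key_lt _ _ _ _ n.+1 (ltnW (ltn_ord i)) (ltnW (ltn_ord j))). by [].
Qed.


Lemma phi_S0 : phi_word R S0 = zeta_word a.
Proof.
set N := n.+1.
set sK := sort leq Kup.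
have E1 : S0 ++ [seq x + 1 | x <- S0] = map e (sK ++ [seq (k + N)%N | k <- sK]).
  by rewrite map_cat /S0 -!map_comp; congr (_ ++ _); apply: eq_map => k /=; rewrite e_shift.
rewrite /phi_word E1 -(map_sort e_le) -map_comp.
rewrite (eq_map (g := fun y => y \in Kup)); last by move=> y /=; rewrite mem_map ?mem_sort //; exact: e_inj.
have E2 : sort leq (sK ++ [seq (k + N)%N | k <- sK]) = sort leq (Kup ++ Krt).
  apply/(perm_sortP leq_total leq_trans anti_leq).
  apply: perm_cat; first by rewrite perm_sort.
  have -> : Krt = [seq (k + N)%N | k <- Kup].
    by rewrite /Krt /Kup -map_comp; apply: eq_map => i; rewrite /= /key addnAC -mulSnr.
  by apply: perm_map; rewrite perm_sort.
rewrite E2.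
set M := (foldr maxn 0%N a).+2.
rewrite (@sort_uniq_iota _ (M * N)); last first.
- apply/allP => k; rewrite mem_cat => /orP[] /mapP[i]; rewrite mem_iota /= add0n => iN ->.
    apply: (@leq_trans ((nth 0%N a i).+1 * N)); first by rewrite mulSnr /key ltn_add2l ltnW.
    by rewrite leq_mul2r ltnS ltnW ?orbT // ltnS nth_le_max.
  apply: (@leq_trans ((nth 0%N a i).+2 * N)); first by rewrite [X in (_ < X)%N]mulSnr ltn_add2l ltnW.
  by rewrite leq_mul2r ltnS ltnS nth_le_max orbT.
- rewrite cat_uniq /Kup /key uniq_keys /Krt (uniq_keys (fun i => (nth 0%N a i).+1)) andbT /=.
  apply/hasPn => k /mapP[i iN ->]; apply/mapP => [[j jN E]].
  move: iN jN; rewrite !mem_iota /= !add0n => iN jN.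
  have [Ea Eij] := keyE _ _ _ _ n.+1 (ltnW iN) (ltnW jN) E.
  by move: Ea; rewrite Eij; lia.
have := iota_blocks N M 0; rewrite mul0n => ->.
rewrite filter_flatten -map_comp /zeta_word map_flatten -map_comp; congr flatten.
apply: eq_map => l; rewrite /comp.
rewrite -[(l * N)%N]addn0 iotaDl filter_map -map_comp.
rewrite (_ : iota 0 N = iota 0 n ++ [:: n]); last by rewrite /N -addn1 iotaD.
rewrite filter_cat map_cat /=.
rewrite mem_cat /Kup /Krt /key key_mem // key_memS // ltnn /= cats0.
rewrite -[in RHS](mkseq_nth 0%N a) sza /mkseq filter_map -map_comp.
rewrite (@eq_in_filter _ _ (fun j => (nth 0%N a j == l) || ((nth 0%N a j).+1 == l))); last first.
  move=> j; rewrite mem_iota /= add0n => jn.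
  rewrite /= /N mem_cat key_memS; last exact: ltnW.
  rewrite key_mem; last exact: ltnW.
  by case: ltnP jn.
apply/eq_in_map => j; rewrite mem_filter mem_iota /= add0n => /andP[_ jn].
rewrite /= key_mem; last exact: ltnW.
by case: ltnP jn.
Qed.

End Constr.

End Reals.

Lemma size_area_aux u r D : size (area_aux u r D) = count id D.
Proof. by elim: D u r => [|[] D IH] u r //=; rewrite IH. Qed.


Theorem mainTheorem5 (R : realType) (n : nat) (D : seq bool) :
  (1 <= n)%N -> is_dyck n D ->
  (exists S : seq R, starting_set R n (psi n (area D)) S /\ disjoint_shift R S) /\
  (forall S : seq R, starting_set R n (psi n (area D)) S -> disjoint_shift R S ->
     phi_word R S = zeta_word (area D)).
Proof.
move=> _ [_ cD _].
have sza : size (area D) = n by rewrite /area size_area_aux.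
have [H0 D0] := S0_start R n (area D).
split; first by exists (S0 R n (area D)).
move=> S HS DS.
rewrite -(@phi_S0 R n (area D) sza).
exact: (@phi_unique R n _ S _ HS DS H0 D0).
Qed.
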